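(* Let $\hat B$ be the bus susceptance matrix of a connected power network (the post-attack network) with bus set $\mathcal N$. Let $P^g, P^d \in \mathbb R^{\mathcal N}$ be vectors of active generation and load, and let $\theta \in \mathbb R^{\mathcal N}$ satisfy $\hat B\theta = P^g - P^d$. Let $s \neq t$ be two generator buses, let $\Gamma > 0$, and define $\delta \in \mathbb R^{\mathcal N}$ by $\delta_s = \Gamma$, $\delta_t = -\Gamma$, $\delta_k = 0$ for all $k \neq s,t$. Put $\hat P^g = P^g + \delta$ and let $\hat\theta$ satisfy $\hat B \hat\theta = \hat P^g - P^d$. Let $k \neq t$ be a bus such that the network contains a path between $s$ and $k$ that does not include $t$. Then $$\hat\theta_k - \hat\theta_t \;>\; \theta_k - \theta_t .$$
   Context: DC power flow model. The network is an undirected connected graph on the bus set $\mathcal N$; each line $km$ has reactance $x_{km} > 0$. The bus susceptance matrix $\hat B$ is defined by $\hat B_{kk} = \sum_{km \ni k} 1/x_{km}$ (sum over lines incident to $k$), $\hat B_{km} = -1/x_{km}$ if $km$ is a line, and $\hat B_{km} = 0$ otherwise. A path between $s$ and $k$ ''includes $t$'' if $t$ is one of its vertices. *)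

(* Defs.v *)
From HB Require Import structures.
From mathcomp Require Import all_boot all_order all_algebra.
Set Implicit Arguments. Unset Strict Implicit. Unset Printing Implicit Defensive.
Import Order.TTheory GRing.Theory Num.Theory.
Local Open Scope ring_scope.

(* Network: buses form a finite type T; lines are given by a symmetric,
   irreflexive relation e; x a b is the reactance of line ab. *)

Definition Bhat (R : realFieldType) (T : finType) (e : rel T) (x : T -> T -> R)
  (k m : T) : R :=
  if k == m then \sum_(j : T | e k j) (x k j)^-1
  else if e k m then - (x k m)^-1 else 0.

Definition Bmul (R : realFieldType) (T : finType) (e : rel T) (x : T -> T -> R)
  (v : T -> R) (k : T) : R :=
  \sum_(m : T) Bhat e x k m * v m.

Definition delta (R : realFieldType) (T : finType) (s t : T) (Gamma : R) (k : T) : R :=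
  if k == s then Gamma else if k == t then - Gamma else 0.

Definition path_avoiding (T : finType) (e : rel T) (s k t : T) : Prop :=
  exists p : seq T, [&& path e s p, last s p == k & t \notin s :: p].

(* Main.v *)
Require Import Defs.
From HB Require Import structures.
From mathcomp Require Import all_boot all_order all_algebra.
From mathcomp Require Import lra.
Import Order.TTheory GRing.Theory Num.Theory.
Local Open Scope ring_scope.

Lemma Bmul_lap (R : realFieldType) (T : finType) (e : rel T) (x : T -> T -> R)
  (e_irr : irreflexive e) (d : T -> R) (v : T) :
  Bmul e x d v = \sum_(j | e v j) (x v j)^-1 * (d v - d j).
Proof.
rewrite /Bmul.
have H : forall m, Bhat e x v m * d m =
   (if m == v then (\sum_(j | e v j) (x v j)^-1) * d v else 0)
   - (if e v m then (x v m)^-1 * d m else 0).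
  move=> m; rewrite /Bhat.
  have [->|Hne] := eqVneq m v; first by rewrite ?eqxx e_irr subr0.
  rewrite ?(negbTE Hne) 1?eq_sym ?(negbTE Hne) /=.
  by case: ifP => _; rewrite ?mulNr ?sub0r ?mul0r ?subr0 ?oppr0.
rewrite (eq_bigr _ (fun m _ => H m)) sumrB -big_mkcond /= -big_mkcond /=.
rewrite big_pred1_eq mulr_suml -sumrB.
by apply: eq_bigr => j _; rewrite mulrBr.
Qed.

Theorem lemma1 (R : realFieldType) (T : finType) (e : rel T) (x : T -> T -> R)
  (e_sym : symmetric e) (e_irr : irreflexive e)
  (x_sym : forall a b, x a b = x b a)
  (x_pos : forall a b, e a b -> 0 < x a b)
  (connected : forall a b : T, connect e a b)
  (Gen : {set T}) (Pg Pd theta thetah : T -> R)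
  (Htheta : forall k, Bmul e x theta k = Pg k - Pd k)
  (s t : T) (hs : s \in Gen) (ht : t \in Gen) (hst : s != t)
  (Gamma : R) (hGamma : 0 < Gamma)
  (Hthetah : forall k, Bmul e x thetah k = (Pg k + delta s t Gamma k) - Pd k)
  (k : T) (hk : k != t) (hpath : path_avoiding e s k t) :
  theta k - theta t < thetah k - thetah t.
Proof.
set d := fun v => thetah v - theta v.
have Hd : forall v, \sum_(j | e v j) (x v j)^-1 * (d v - d j) = delta s t Gamma v.
  move=> v; rewrite -Bmul_lap // /Bmul.
  have -> : \sum_m Bhat e x v m * d m =
     Bmul e x thetah v - Bmul e x theta v.
    by rewrite /Bmul -sumrB; apply: eq_bigr => m _; rewrite mulrBr.
  rewrite Htheta Hthetah; lra.
case: (@arg_minP _ R T t xpredT d isT) => v0 _ Hmin.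
set M := d v0.
have HM : forall v, M <= d v by move=> v; exact: Hmin.
(* minimum principle *)
have Hprop : forall v w, d v = M -> v != t -> e v w -> d w = M.
  move=> v w Hv Hvt Hvw.
  have Hge : forall j, e v j -> 0 <= (x v j)^-1 * (d j - d v).
    move=> j Hj; apply: mulr_ge0; first by rewrite invr_ge0 ltW // x_pos.
    by rewrite subr_ge0 Hv HM.
  have Hdel : 0 <= delta s t Gamma v.
    by rewrite /delta (negbTE Hvt); case: ifP => _; lra.
  have Hsum : \sum_(j | e v j) (x v j)^-1 * (d j - d v) = 0.
    apply/eqP; rewrite eq_le sumr_ge0 // andbT.
    have -> : \sum_(j | e v j) (x v j)^-1 * (d j - d v) =
       - \sum_(j | e v j) (x v j)^-1 * (d v - d j).
      rewrite -sumrN; apply: eq_bigr => j _; rewrite -mulrN (opprB (d v)) //.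
    by rewrite Hd oppr_le0.
  have := psumr_eq0P Hge Hsum Hvw.
  move/eqP; rewrite mulf_eq0 invr_eq0 (gt_eqF (x_pos _ _ Hvw)) /= subr_eq0.
  by move/eqP->.
have HtM : d t = M.
  apply/eqP/negPn/negP => Hne.
  have Hfw : forall a p, path e a p -> d a = M -> d (last a p) = M.
    move=> a p; elim: p a => [|b p IH] a //= /andP[Hab Hp] Ha.
    apply: IH => //; apply: (Hprop a) => //.
    by apply/eqP => Eat; move: Hne; rewrite -Eat Ha eqxx.
  case/connectP: (connected v0 t) => p Hp Et.
  by move: Hne; rewrite Et (Hfw _ _ Hp) // eqxx.
case: hpath => p /and3P[Hp /eqP Hlast Hnt].
have Hbw : forall a p, path e a p -> t \notin a :: p -> d (last a p) = M -> d a = M.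
  move=> a q; elim: q a => [|b q IH] a //= /andP[Hab Hq].
  rewrite in_cons negb_or => /andP[Hta Htq] Hl.
  have Hb : d b = M by apply: IH.
  apply: (Hprop b) => //; first by move: Htq; rewrite in_cons negb_or eq_sym => /andP[].
  by rewrite e_sym.
rewrite -subr_gt0.
have -> : thetah k - thetah t - (theta k - theta t) = d k - d t by rewrite /d; lra.
rewrite subr_gt0 HtM lt_def HM andbT.
apply/negP => /eqP EkM.
have HsM : d s = M by apply: (Hbw s p) => //; rewrite Hlast EkM.
have : \sum_(j | e s j) (x s j)^-1 * (d s - d j) <= 0.
  apply: sumr_le0 => j Hj; apply: mulr_ge0_le0.
    by rewrite invr_ge0 ltW // x_pos.
  by rewrite subr_le0 HsM HM.
by rewrite Hd /delta eqxx; lra.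
Qed.
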